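(* Let $\mathcal{U}$ be a finite set of submitted data units, each with a submitted identity, let $e_\theta$ be an evidence function whose graph on $\mathcal{U}$ has connected components (clusters) $C_1,\dots,C_K$, let $R_\theta$ be a cluster representative operator, and let $\bar v_\theta$ be the resulting quotient game on $[K]$. Let the quotient semivalue attribution pay submitted identity $i$ the amount $p_i^{Q,\omega}(S)=\sum_{k=1}^K a_{i,k}\,\varphi_k^\omega(\bar v_\theta)$ with within-cluster shares $a_{i,k}\in[0,1]$, $\sum_i a_{i,k}=1$. Suppose a manipulation $\alpha$ by latent provider $i$, replacing identity $i$ by pseudonyms $I_i^\alpha$ and producing profile $S^\alpha$ with quotient game $\bar v_\theta^\alpha$ and shares $a^\alpha_{j,k}$, is quotient-stable, and the within-cluster allocation rule is false-name-neutral. Then for any semivalue weights $\omega$ and any value function $\bar v_\theta$, the additive false-name gain \[\Gamma_i=\sum_{j\in I_i^\alpha}p_j^{Q,\omega}(S^\alpha)-p_i^{Q,\omega}(S)\] equals $0$; that is, quotient semivalue attribution is exactly false-name-proof against $\alpha$.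
   Context: Evidence function: $e_\theta(u,u')\in\{0,1\}$; the graph $G_\theta$ on $\mathcal{U}$ has an edge between $u,u'$ iff $e_\theta(u,u')=1$, and its connected components $C_1,\dots,C_K$ are the attribution clusters. A cluster representative $R_\theta$ maps each cluster to a multiset of canonical training units (e.g., collapsing exact duplicates). The quotient game is $\bar v_\theta(Q)=U(A(\bigcup_{k\in Q}R_\theta(C_k)))-U(A(\emptyset))$ for $Q\subseteq[K]$, where $A$ is a learner mapping a multiset of training examples to a model and $U$ is a utility. Semivalue: $\varphi_k^\omega(w)=\sum_{Q\subseteq[K]\setminus\{k\}}\omega_{K,|Q|}[w(Q\cup\{k\})-w(Q)]$ with $\omega_{K,s}\ge0$, $\sum_s\binom{K-1}{s}\omega_{K,s}=1$. Quotient-stable: the manipulation leaves (a) the set of clusters unchanged up to relabelling of cluster ids and (b) each representative $R_\theta(C_k)$ unchanged as a multiset of canonical training units. False-name-neutral: for every cluster $k$, $\sum_{j\in I_i^\alpha}a^\alpha_{j,k}=a_{i,k}$ (simultaneously for all $k$). *)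

(* Defs.v *)
From HB Require Import structures.
From mathcomp Require Import all_boot all_order all_algebra.
Set Implicit Arguments. Unset Strict Implicit. Unset Printing Implicit Defensive.
Import Order.TTheory GRing.Theory Num.Theory.
Local Open Scope ring_scope.

Definition evidence_graph (W : finType) (e : rel W) (S : {set W}) : rel W :=
  [rel x y | [&& x \in S, y \in S & e x y || e y x]].

Definition clusters (W : finType) (e : rel W) (S : {set W}) : {set {set W}} :=
  [set [set y | connect (evidence_graph e S) x y] | x in S].

Definition cluster_labelling (W : finType) (e : rel W) (S : {set W})
    (K : nat) (C : 'I_K -> {set W}) : Prop :=
  injective C /\ forall A : {set W}, A \in clusters e S <-> exists k, C k = A.

(* Quotient game: vbar(Q) = U(A(U_{k in Q} R(C_k))) - U(A(emptyset)).
   UA : seq D -> R is the composite U o A applied to a multiset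
   (represented by a sequence; UA is assumed permutation invariant). *)
Definition quotient_game (R : ringType) (W : finType) (D : Type)
    (K : nat) (C : 'I_K -> {set W}) (Rep : {set W} -> seq D)
    (UA : seq D -> R) (Q : {set 'I_K}) : R :=
  UA (flatten [seq Rep (C k) | k <- enum Q]) - UA [::].

Definition semivalue_weights (R : numDomainType) (omega : nat -> nat -> R) : Prop :=
  forall K : nat, (forall s, 0 <= omega K s) /\
    ((0 < K)%N -> \sum_(s < K) ('C(K.-1, s))%:R * omega K s = 1).

Definition semivalue (R : ringType) (K : nat) (omega : nat -> nat -> R)
    (w : {set 'I_K} -> R) (k : 'I_K) : R :=
  \sum_(Q : {set 'I_K} | k \notin Q) omega K #|Q| * (w (k |: Q) - w Q).

Definition payment (R : ringType) (Id : finType) (K : nat)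
    (a : Id -> 'I_K -> R) (omega : nat -> nat -> R)
    (vbar : {set 'I_K} -> R) (i : Id) : R :=
  \sum_(k < K) a i k * semivalue omega vbar k.

Definition valid_shares (R : numDomainType) (Id : finType) (K : nat)
    (a : Id -> 'I_K -> R) : Prop :=
  (forall i k, 0 <= a i k <= 1) /\ (forall k, \sum_(i : Id) a i k = 1).

(* Main.v *)
Require Import Defs.
From HB Require Import structures.
From mathcomp Require Import all_boot all_order all_algebra.
Import Order.TTheory GRing.Theory Num.Theory.
Local Open Scope ring_scope.

Lemma perm_flatten_map (I : Type) (T : eqType) (s : seq I) (f g : I -> seq T) :
  (forall x, perm_eq (f x) (g x)) -> perm_eq (flatten (map f s)) (flatten (map g s)).
Proof.
move=> H; elim: s => //= x s IH; exact: perm_cat.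
Qed.

Theorem theorem2
  (R : realFieldType) (W : finType) (D : eqType) (Id : finType)
  (e : rel W) (UA : seq D -> R)
  (HUA : forall s t : seq D, perm_eq s t -> UA s = UA t)
  (omega : nat -> nat -> R) (Homega : semivalue_weights omega)
  (* original profile S *)
  (S : {set W}) (K : nat) (C : 'I_K -> {set W}) (Rep : {set W} -> seq D)
  (a : Id -> 'I_K -> R)
  (HC : cluster_labelling e S C) (Ha : valid_shares a)
  (* manipulated profile S^alpha *)
  (S' : {set W}) (K' : nat) (C' : 'I_K' -> {set W}) (Rep' : {set W} -> seq D)
  (a' : Id -> 'I_K' -> R)
  (HC' : cluster_labelling e S' C') (Ha' : valid_shares a')
  (* the manipulating provider and its pseudonyms *)
  (i : Id) (I : {set Id})
  (* quotient-stability: (a) same clusters, (b) same representatives *)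
  (Hstab_a : clusters e S = clusters e S')
  (Hstab_b : forall A, A \in clusters e S -> perm_eq (Rep A) (Rep' A))
  (* false-name neutrality, for every cluster (matched across relabelling) *)
  (Hfnn : forall (k : 'I_K) (k' : 'I_K'), C k = C' k' ->
            \sum_(j in I) a' j k' = a i k) :
  \sum_(j in I) payment a' omega (quotient_game C' Rep' UA) j
    - payment a omega (quotient_game C Rep UA) i = 0.
Proof.
case: HC => injC HC; case: HC' => injC' HC'.
have Ex1 : forall k : 'I_K, exists k' : 'I_K', C' k' == C k.
  move=> k; have /HC' [k' Hk'] : C k \in clusters e S'.
    by rewrite -Hstab_a; apply/HC; exists k.
  by exists k'; apply/eqP.
have Ex2 : forall k' : 'I_K', exists k : 'I_K, C k == C' k'.
  move=> k'; have /HC [k Hk] : C' k' \in clusters e S.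
    by rewrite Hstab_a; apply/HC'; exists k'.
  by exists k; apply/eqP.
pose sg k := sval (sigW (Ex1 k)).
pose tg k' := sval (sigW (Ex2 k')).
have Hsg : forall k, C' (sg k) = C k by move=> k; apply/eqP; rewrite /sg; case: sigW.
have Htg : forall k', C (tg k') = C' k' by move=> k'; apply/eqP; rewrite /tg; case: sigW.
have sgK : cancel sg tg by move=> k; apply: injC; rewrite Htg Hsg.
have tgK : cancel tg sg by move=> k; apply: injC'; rewrite Hsg Htg.
have bsg : bijective sg by exists tg.
have injsg : injective sg := can_inj sgK.
have HK : K' = K by rewrite -[K]card_ord -[K']card_ord (bij_eq_card bsg).
have Hv : forall Q : {set 'I_K},
    quotient_game C' Rep' UA (sg @: Q) = quotient_game C Rep UA Q.
  move=> Q; rewrite /quotient_game; congr (_ - _); apply: HUA.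
  have P1 : perm_eq (enum (sg @: Q)) (map sg (enum Q)).
    apply: uniq_perm; first exact: enum_uniq.
      by rewrite map_inj_uniq ?enum_uniq.
    move=> x; rewrite mem_enum; apply/imsetP/mapP => -[y Hy ->]; exists y => //;
      by move: Hy; rewrite mem_enum.
  apply: (perm_trans (perm_flatten (perm_map _ P1))).
  rewrite -map_comp; apply: perm_flatten_map => k /=.
  rewrite Hsg perm_sym; apply: Hstab_b; apply/HC; by exists k.
have Hphi : forall k, semivalue omega (quotient_game C' Rep' UA) (sg k)
                     = semivalue omega (quotient_game C Rep UA) k.
  move=> k; rewrite /semivalue.
  have bim : bijective (fun Q : {set 'I_K} => (sg @: Q : {set 'I_K'})).
    exists (fun Q : {set 'I_K'} => (tg @: Q : {set 'I_K})) => Q; rewrite -imset_comp.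
      by rewrite (eq_imset _ sgK) imset_id.
    by rewrite (eq_imset _ tgK) imset_id.
  rewrite (reindex (fun Q : {set 'I_K} => sg @: Q)); last exact: onW_bij.
  apply: eq_big => [Q|Q _]; first by rewrite mem_imset.
  by rewrite -imsetU1 !Hv card_imset // HK.
rewrite /payment exchange_big /=.
rewrite (reindex sg); last exact: onW_bij.
rewrite -sumrB big1 // => k _.
rewrite -mulr_suml Hphi (Hfnn k (sg k)) ?subrr //.
Qed.
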